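(* Let $T$ be an invertible operator in $\mathcal D(\mathcal P_n)$. Then $Z(Tf)\subset Z(f)+\Omega$ for every $f\in\mathcal P_n\setminus\{0\}$ and every circular domain $\Omega$ such that $Z(T\phi_k)\subset\Omega$ for all $k=1,\dots,n$.
   Context: Let $n\ge 1$ be an integer and $\mathcal P_n$ the complex vector space of polynomials in one complex variable of degree at most $n$; $\phi_k(z)=z^k/k!$. $D$ is differentiation on $\mathcal P_n$, $I$ the identity, and $\mathcal D(\mathcal P_n)$ the linear span of $I,D,\dots,D^n$. For a nonzero $f$, $Z(f)$ is the multiset of roots of $f$ (with multiplicity; empty for nonzero constants). For $A,B\subset\mathbb C$, $A+B=\{u+v:u\in A,v\in B\}$ (empty if $A$ is empty). A circular domain is an open or closed disk, the open or closed exterior of a disk, or an open or closed half-plane in $\mathbb C$. *)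

(* Defs.v *)
From HB Require Import structures.
From mathcomp Require Import all_boot all_order all_algebra.
From mathcomp Require Import complex.
From mathcomp Require Import reals.
Set Implicit Arguments. Unset Strict Implicit. Unset Printing Implicit Defensive.
Import Order.TTheory GRing.Theory Num.Theory.
Local Open Scope ring_scope.
Local Open Scope complex_scope.

Section Defs.
Variable R : realType.
Local Notation C := (R[i]).

Definition inPn (n : nat) (f : {poly C}) : Prop := (size f <= n.+1)%N.

Definition phi (k : nat) : {poly C} := (k`!%:R)^-1 *: 'X^k.

Definition Dop (n : nat) (a : 'I_n.+1 -> C) (f : {poly C}) : {poly C} :=
  \sum_(k < n.+1) a k *: f^`(k).

Definition invertible_on_Pn (n : nat) (T : {poly C} -> {poly C}) : Prop :=
  (forall f, inPn n f -> inPn n (T f)) /\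
  exists S : {poly C} -> {poly C},
    (forall g, inPn n g -> inPn n (S g)) /\
    (forall f, inPn n f -> S (T f) = f) /\
    (forall g, inPn n g -> T (S g) = g).

(* the (underlying set of the) zero multiset Z(f) *)
Definition Zset (f : {poly C}) : C -> Prop := fun z => root f z.

Definition msum (A B : C -> Prop) : C -> Prop :=
  fun w => exists u v, A u /\ B v /\ w = u + v.

Definition circular_domain (Om : C -> Prop) : Prop :=
  (exists (c : C) (r : R), 0 < r /\
     ((forall z, Om z <-> `|z - c| < r%:C) \/
      (forall z, Om z <-> `|z - c| <= r%:C) \/
      (forall z, Om z <-> r%:C < `|z - c|) \/
      (forall z, Om z <-> r%:C <= `|z - c|)))
  \/
  (exists (a : C) (b : R), a != 0 /\
     ((forall z, Om z <-> b < complex.Re (a * z)) \/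
      (forall z, Om z <-> b <= complex.Re (a * z)))).
End Defs.

(* Main.v *)
Require Import Defs.
From HB Require Import structures.
From mathcomp Require Import all_boot all_order all_algebra.
From mathcomp Require Import complex.
From mathcomp Require Import reals.
From mathcomp Require Import ring lra.
From Stdlib Require Import Classical_Prop.
Import Order.TTheory GRing.Theory Num.Theory.
Local Open Scope ring_scope.
Local Open Scope complex_scope.
Set Implicit Arguments. Unset Strict Implicit.
Set Implicit Arguments. Unset Strict Implicit.
Section S. Variable R : realType.
Local Notation C := R[i].
Local Notation Re := (@complex.Re R).
Local Notation Im := (@complex.Im R).
Definition HH (al b1 b2 g : R) (u : C) : R :=
  al * (Re u ^+ 2 + Im u ^+ 2) + b1 * Re u + b2 * Im u + g.

Lemma sq2_eq0 (p q : R) : (p ^+ 2 + q ^+ 2 == 0) = (p == 0) && (q == 0).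
Proof. by rewrite paddr_eq0 ?sqr_ge0 // !sqrf_eq0. Qed.

Lemma nrm_gt0 (v : C) : v != 0 -> 0 < Re v ^+ 2 + Im v ^+ 2.
Proof.
case: v => p q /= nz; rewrite lt_def sq2_eq0 addr_ge0 ?sqr_ge0 // andbT.
by apply: contra nz => /andP[/eqP-> /eqP->].
Qed.

Lemma inv_id al b1 b2 g (w v : C) : v != 0 ->
  let t := v^-1 in
  HH al b1 b2 g (w - v) * (Re t ^+ 2 + Im t ^+ 2) =
  HH al b1 b2 g w * (Re t ^+ 2 + Im t ^+ 2) + (- (2 * al * Re w) - b1) * Re t
   + (2 * al * Im w + b2) * Im t + al.
Proof.
move=> nz; have := nrm_gt0 nz; rewrite lt0r => /andP[hs _].
move: nz hs; case: v => p q; case: w => w1 w2 /= nz hs.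
rewrite /HH /=.
field. exact: hs.
Qed.

Lemma ReD (x y : C) : Re (x + y) = Re x + Re y. Proof. by case: x; case: y. Qed.
Lemma ImD (x y : C) : Im (x + y) = Im x + Im y. Proof. by case: x; case: y. Qed.
Lemma Re_sum (s : seq C) : Re (\sum_(t <- s) t) = \sum_(t <- s) Re t.
Proof. elim: s => [|x s IH]; first by rewrite !big_nil. by rewrite !big_cons ReD IH. Qed.
Lemma Im_sum (s : seq C) : Im (\sum_(t <- s) t) = \sum_(t <- s) Im t.
Proof. elim: s => [|x s IH]; first by rewrite !big_nil. by rewrite !big_cons ImD IH. Qed.
Lemma Re_divn (x : C) (N : nat) : Re (x / N%:R) = Re x / N%:R.
Proof.
case: x => a b; have -> : (N%:R : C) = (N%:R : R)%:C by rewrite rmorph_nat.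
rewrite /= expr0n /= addr0 mul0r oppr0 mulr0 subr0.
case: (eqVneq (N%:R : R) 0) => [->|nz]; first by rewrite !mul0r invr0 !mulr0.
by field.
Qed.
Lemma Im_divn (x : C) (N : nat) : Im (x / N%:R) = Im x / N%:R.
Proof.
case: x => a b; have -> : (N%:R : C) = (N%:R : R)%:C by rewrite rmorph_nat.
rewrite /= expr0n /= addr0 mul0r oppr0 mulr0 add0r.
case: (eqVneq (N%:R : R) 0) => [->|nz]; first by rewrite !mul0r invr0 !mulr0.
by field.
Qed.

Lemma cs (xs : seq R) : (\sum_(x <- xs) x) ^+ 2 <= (size xs)%:R * \sum_(x <- xs) x ^+ 2.
Proof.
elim: xs => [|y xs IH]; first by rewrite !big_nil expr0n mul0r.
rewrite !big_cons /=.
have h : 0 <= \sum_(x <- xs) (x - y) ^+ 2 by apply: sumr_ge0 => *; apply: sqr_ge0.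
have e : \sum_(x <- xs) (x - y) ^+ 2 = \sum_(x <- xs) x ^+ 2 - 2 * y * \sum_(x <- xs) x
   + (size xs)%:R * y ^+ 2.
  elim: xs {IH h} => [|z zs IHz]; first by rewrite !big_nil /=; ring.
  rewrite !big_cons IHz /=; rewrite -[(size zs).+1]addn1 natrD; ring.
rewrite e in h; rewrite -[(size xs).+1]addn1 natrD; nra.
Qed.

Lemma jensen (c L1 L2 k : R) (s : seq C) (N : nat) :
  0 <= c -> (size s <= N)%N -> (0 < N)%N ->
  let F := fun t : C => c * (Re t ^+ 2 + Im t ^+ 2) + L1 * Re t + L2 * Im t + k in
  N%:R * F ((\sum_(t <- s) t) / N%:R) <= \sum_(t <- s) F t + (N - size s)%:R * k.
Proof.
move=> c0 sN N0 /=; rewrite Re_divn Im_divn Re_sum Im_sum.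
have hN : (0 : R) < N%:R by rewrite ltr0n.
set X := \sum_(t <- s) Re t; set Y := \sum_(t <- s) Im t.
have sumF : \sum_(t <- s) (c * (Re t ^+ 2 + Im t ^+ 2) + L1 * Re t + L2 * Im t + k) = c * (\sum_(t <- s) Re t ^+ 2 + \sum_(t <- s) Im t ^+ 2)
    + L1 * X + L2 * Y + (size s)%:R * k.
  rewrite /X /Y; elim: (s) => [|x s' IH]; first by rewrite !big_nil /= !(mulr0, addr0, mul0r).
  rewrite !big_cons IH /= -[(size s').+1]addn1 natrD; ring.
rewrite sumF.
have h1 := cs (map Re s); have h2 := cs (map Im s).
rewrite !big_map size_map -/X in h1; rewrite !big_map size_map -/Y in h2.
have hsN : (size s)%:R <= (N%:R : R) by rewrite ler_nat.
have q1 : 0 <= \sum_(t <- s) Re t ^+ 2 by apply: sumr_ge0 => *; apply: sqr_ge0.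
have q2 : 0 <= \sum_(t <- s) Im t ^+ 2 by apply: sumr_ge0 => *; apply: sqr_ge0.
rewrite natrB //.
have key : X ^+ 2 + Y ^+ 2 <= N%:R * (\sum_(t <- s) Re t ^+ 2 + \sum_(t <- s) Im t ^+ 2).
  rewrite mulrDr; apply: lerD.
    by apply: (le_trans h1); apply: ler_wpM2r.
  by apply: (le_trans h2); apply: ler_wpM2r.
have : c * (X ^+ 2 + Y ^+ 2) / N%:R <= c * (\sum_(t <- s) Re t ^+ 2 + \sum_(t <- s) Im t ^+ 2).
  rewrite ler_pdivrMr // -mulrA; apply: ler_wpM2l => //; rewrite mulrC.
  exact: key.
have -> : N%:R * (c * ((X / N%:R) ^+ 2 + (Y / N%:R) ^+ 2) + L1 * (X / N%:R) + L2 * (Y / N%:R) + k)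
  = c * (X ^+ 2 + Y ^+ 2) / N%:R + L1 * X + L2 * Y + N%:R * k.
  by field; rewrite gt_eqF.
lra.
Qed.
End S.

Section P. Variable F : fieldType.
Local Notation C := F.

Definition polar (N : nat) (ze : C) (q : {poly C}) : {poly C} :=
  q *+ N + (ze%:P - 'X) * q^`().

Lemma coef_polar N ze q i :
  (polar N ze q)`_i = q`_i *+ N - q`_i *+ i + ze * q`_i.+1 *+ i.+1.
Proof.
rewrite /polar coefD coefMn mulrBl coefB coefCM coefXM !coef_deriv.
case: i => [|i] /=; first by rewrite subr0 mulr0n subr0 mulrnAr.
by rewrite mulrnAr addrA addrAC.
Qed.
Lemma horner_polar N ze q w :
  (polar N ze q).[w] = q.[w] *+ N + (ze - w) * q^`().[w].
Proof. by rewrite /polar hornerD hornerMn hornerM hornerD hornerN hornerC hornerX. Qed.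

Lemma derivn_XsubC u (h : {poly C}) j :
  (('X - u%:P) * h)^`(j.+1) = ('X - u%:P) * h^`(j.+1) + h^`(j) *+ j.+1.
Proof.
elim: j => [|j IH].
  by rewrite derivn1 derivM derivXsubC mul1r derivn0 derivn1 addrC.
rewrite derivnS IH derivD derivM derivXsubC mul1r derivMn -!derivnS.
by rewrite [in RHS]mulrS addrCA addrA.
Qed.

Lemma hornerXsubCn u (h : {poly C}) j z :
  ((('X - u%:P) * h)^`(j)).[z] = (z - u) * (h^`(j)).[z] + (h^`(j.-1)).[z] *+ j.
Proof.
case: j => [|j]; first by rewrite !derivn0 hornerM hornerXsubC mulr0n addr0.
by rewrite derivn_XsubC hornerD hornerM hornerXsubC hornerMn.
Qed.

Definition pairP (m : nat) (q f : {poly C}) (z : C) : C :=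
  \sum_(i < m.+1) q`_i * (f^`(m - i)).[z] *+ i`!.

Lemma pair_step m (q : {poly C}) (u : C) (h : {poly C}) (z : C) : (size h <= m.+1)%N ->
  pairP m.+1 q (('X - u%:P) * h) z = pairP m (polar m.+1 (z - u) q) h z.
Proof.
move=> sh; rewrite /pairP.
under eq_bigr => i _ do rewrite hornerXsubCn mulrDr mulrnDl.
rewrite big_split /=.
rewrite big_ord_recl /= -derivnS (derivn_poly0 sh) horner0 !mulr0 mul0rn add0r.
rewrite [\sum_(i < m.+2) _]big_ord_recr /= subnn mulr0n mulr0 mul0rn addr0.
under [in RHS]eq_bigr => i _ do rewrite coef_polar mulrDl mulrnDl.
rewrite big_split /= addrC; congr (_ + _).
  apply: eq_bigr => i _.
  have hi : (i <= m)%N by rewrite -ltnS.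
  rewrite subSn //=; rewrite -mulrnBr ?leqW //.
  move: (q`_i) (h^`(m - i).[z]) => x y.
  by rewrite subSn //; ring.
apply: eq_bigr => i _.
rewrite /bump /= add1n subSS factS.
move: (q`_i.+1) (h^`(m - i).[z]) => x y.
ring.
Qed.

Lemma logderiv (s : seq C) (w : C) : (forall x, x \in s -> w != x) ->
  (\prod_(x <- s) ('X - x%:P))^`().[w] =
  (\prod_(x <- s) ('X - x%:P)).[w] * \sum_(x <- s) (w - x)^-1.
Proof.
elim: s => [|x s IH] hs; first by rewrite !big_nil mulr0 -polyC1 derivC horner0.
have hx : w - x != 0 by rewrite subr_eq0 hs // mem_head.
rewrite !big_cons derivM derivXsubC mul1r hornerD !hornerM hornerXsubC.
rewrite IH; last by move=> y ys; apply: hs; rewrite in_cons ys orbT.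
move: (\prod_(j <- s) ('X - j%:P)).[w] (\sum_(j <- s) (w - j)^-1) hx => P S hx.
by field.
Qed.

Lemma prod_top (s : seq C) : (\prod_(x <- s) ('X - x%:P))`_(size s) = 1.
Proof.
have := monicP (@monic_prod_XsubC _ _ s (fun _ => true) (fun x => x)); rewrite /lead_coef size_prod_XsubC /=.
by apply.
Qed.

Lemma vieta (s : seq C) : (0 < size s)%N ->
  (\prod_(x <- s) ('X - x%:P))`_(size s).-1 = - \sum_(x <- s) x.
Proof.
elim: s => [|x s IH] //= _.
rewrite !big_cons mulrBl coefB coefXM coefCM prod_top.
case: s IH => [|y s] IH /=; first by rewrite big_nil mulr1 sub0r addr0.
by rewrite IH // mulr1 opprD addrC.
Qed.
End P.

Definition inK (R : realType) (st : bool) (al b1 b2 g : R) (u : R[i]) : bool :=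
  if st then HH al b1 b2 g u < 0 else HH al b1 b2 g u <= 0.

Lemma coef_size (F : fieldType) (p : {poly F}) i : p`_i != 0 -> (i < size p)%N.
Proof. by move=> nz; rewrite ltnNge; apply: contra nz => /(nth_default 0) ->. Qed.

Section L.
Variables (R : realType) (st : bool) (al b1 b2 g : R).
Local Notation C := R[i].
Local Notation Re := (@complex.Re R).
Local Notation Im := (@complex.Im R).
Local Notation K := (inK st al b1 b2 g).
Local Notation H := (HH al b1 b2 g).
Local Notation nrm t := (Re t ^+ 2 + Im t ^+ 2).

Lemma notK_ge0 w : ~~ K w -> 0 <= H w.
Proof.
rewrite /inK; case: st => h; first by rewrite leNgt.
by rewrite ltW // ltNge.
Qed.

Lemma K_scaled v (t : C) : t != 0 ->
  (if st then H v * nrm t < 0 else H v * nrm t <= 0) -> K v.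
Proof.
move=> nz; have hp := nrm_gt0 nz; rewrite /inK; case: st => h.
  by rewrite -(pmulr_llt0 _ hp).
by rewrite -(pmulr_lle0 _ hp).
Qed.

Lemma sum_neg (s : seq C) (f : C -> R) : s != [::] ->
  (forall x, x \in s -> if st then f x < 0 else f x <= 0) ->
  if st then \sum_(x <- s) f x < 0 else \sum_(x <- s) f x <= 0.
Proof.
elim: s => [|x s IH] // _ hs; rewrite big_cons.
have hx := hs x (mem_head _ _).
have hs' : forall y, y \in s -> if st then f y < 0 else f y <= 0.
  by move=> y ys; apply: hs; rewrite in_cons ys orbT.
case: s IH hs hs' => [|y s] IH hs hs'.
  by rewrite big_nil addr0.
have := IH isT hs'; case: st hx => hx h.
  by have := ltrD hx h; rewrite addr0.
by have := lerD hx h; rewrite addr0.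
Qed.

Lemma laguerre N (q : {poly C}) (ze : C) :
  (0 < N)%N -> q != 0 -> (size q <= N.+1)%N -> (size q = N.+1 \/ al < 0) ->
  (forall w, root q w -> K w) -> ~~ K ze ->
  [/\ polar N ze q != 0, (size (polar N ze q) <= N)%N,
      (size (polar N ze q) = N \/ al < 0) &
      (forall w, root (polar N ze q) w -> K w)].
Proof.
move=> N0 q0 sq inv rq Kze.
have [s qE] := closed_field_poly_normal q.
move: qE; set c := lead_coef q; set P := \prod_(z <- s) ('X - z%:P) => qE.
have c0 : c != 0 by rewrite lead_coef_eq0.
have sP : size P = (size s).+1 by rewrite size_prod_XsubC.
have sqs : size q = (size s).+1 by rewrite qE size_scale.
have Ks : forall x, x \in s -> K x.
  by move=> x xs; apply: rq; rewrite qE rootZ // root_prod_XsubC.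
have qze : q.[ze] != 0 by apply: contra Kze => h; apply: rq.
have hN : (N%:R : C) != 0 by rewrite pnatr_eq0 -lt0n.
have hNR : (0 : R) < N%:R by rewrite ltr0n.
have ssN : (size s <= N)%N by rewrite -ltnS -sqs.
have szle : (size (polar N ze q) <= N)%N.
  apply/leq_sizeP => j hj; rewrite coef_polar.
  have e1 : q`_j.+1 = 0 by apply: nth_default; rewrite (leq_trans sq) // ltnS.
  rewrite e1 mulr0 mul0rn addr0.
  move: hj; rewrite leq_eqVlt => /orP[/eqP <-|hj]; first exact: subrr.
  by rewrite (nth_default 0 (leq_trans sq hj)) !mul0rn subr0.
split => //.
- apply/negP => /eqP h0.
  have := horner_polar N ze q ze; rewrite subrr mul0r addr0 h0 horner0 => /esym/eqP.
  by rewrite -mulr_natr mulf_eq0 (negbTE qze) (negbTE hN).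
- have [hal|hal] := ltP al 0; [by right | left].
  have sqN : size q = N.+1 by case: inv => // h; move: hal; rewrite leNgt h.
  have sN : size s = N by apply: succn_inj; rewrite -sqs.
  apply/eqP; rewrite eqn_leq szle /=.
  have hN1 : N = N.-1.+1 by rewrite prednK.
  rewrite {1}hN1; apply: coef_size.
  have e11 : (N - N.-1 = 1)%N by rewrite {1}hN1 subSnn.
  rewrite coef_polar -hN1 -mulrnBr ?leq_pred // e11.
  have eN : q`_N = c by rewrite qE coefZ -sN prod_top mulr1.
  have eN1 : q`_N.-1 = c * - \sum_(x <- s) x by rewrite qE coefZ -sN vieta // sN.
  rewrite eN eN1.
  apply/negP => /eqP hz.
  have hze : ze = (\sum_(x <- s) x) / N%:R.
    apply: (mulIf hN); rewrite divfK //; apply: (mulfI c0).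
    move: hz; move: (\sum_(x <- s) x) => S' hz.
    apply/eqP; rewrite -subr_eq0; apply/eqP.
    transitivity (c * - S' *+ 1 + ze * c *+ N); last exact: hz.
    rewrite mulr1n -mulr_natr; ring.
  have hj := @jensen R al b1 b2 g s N hal ssN N0; rewrite /= -sN subnn mul0r addr0 in hj.
  rewrite sN -hze in hj.
  have hs := sum_neg (f := H) (s := s).
  have sn : s != [::] by apply/eqP => s0; move: sN; rewrite s0 => /= h; move: N0; rewrite -h.
  have := hs sn (fun x xs => Ks x xs).
  move=> hsum; apply: (negP Kze); rewrite /inK /HH.
  case: st hsum => h.
    rewrite -(pmulr_rlt0 _ hNR); exact: le_lt_trans hj h.
  rewrite -(pmulr_rle0 _ hNR); exact: le_trans hj h.
move=> w rw; case Kw: (K w) => //; have nKw : ~~ K w by rewrite Kw.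
have qw : q.[w] != 0 by apply: contra nKw => h; apply: rq.
have ws : forall x, x \in s -> w != x.
  move=> x xs; apply: contra qw => /eqP ->.
  by rewrite qE hornerZ; move: (root_prod_XsubC s x); rewrite xs /root => /eqP ->; rewrite mulr0.
set S := \sum_(x <- s) (w - x)^-1.
have dq : q^`().[w] = q.[w] * S.
  by rewrite qE derivZ !hornerZ logderiv // mulrA.
have e2 : N%:R + (ze - w) * S = 0.
  move: rw; rewrite /root horner_polar dq => /eqP h.
  have : q.[w] * (N%:R + (ze - w) * S) = 0.
    rewrite -h -mulr_natr; move: (q.[w]) => a; ring.
  by move/eqP; rewrite mulf_eq0 (negbTE qw) => /eqP.
have S0 : S != 0.
  by apply/eqP => S0; move: e2; rewrite S0 mulr0 addr0; apply/eqP.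
have sn : s != [::] by apply/eqP => s0; move: S0; rewrite /S s0 big_nil eqxx.
set tau := S / N%:R.
have tau0 : tau != 0 by rewrite mulf_neq0 ?invr_neq0.
have e3 : (ze - w) * S = - N%:R.
  by apply/eqP; rewrite -addr_eq0 addrC e2.
have zeE : ze = w - tau^-1.
  have e4 : ze - w = - N%:R / S by rewrite -e3 mulfK.
  by rewrite /tau invf_div -mulNr -e4 addrC subrK.
have hze := @inv_id R al b1 b2 g w tau^-1 (invr_neq0 tau0).
rewrite /= invrK -zeE in hze.
set ts := [seq (w - x)^-1 | x <- s].
have tsN : (size ts <= N)%N by rewrite size_map.
have hj := @jensen R (H w) (- (2 * al * Re w) - b1) (2 * al * Im w + b2) al ts N
  (notK_ge0 nKw) tsN N0.
rewrite /= big_map -/S -/tau size_map -hze big_map in hj.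
have hx : forall x, x \in s ->
   H w * nrm ((w - x)^-1) + (- (2 * al * Re w) - b1) * Re ((w - x)^-1)
    + (2 * al * Im w + b2) * Im ((w - x)^-1) + al = H x * nrm ((w - x)^-1).
  move=> x xs; have wx : w - x != 0 by rewrite subr_eq0 ws.
  have := @inv_id R al b1 b2 g w (w - x) wx; rewrite /= => <-.
  by rewrite opprB addrC subrK.
rewrite (eq_big_seq (fun x => H x * nrm ((w - x)^-1))) in hj; last first.
  by move=> x xs; rewrite hx.
have hs := @sum_neg s (fun x => H x * nrm ((w - x)^-1)) sn.
have hal : (N - size s)%:R * al <= 0.
  case: inv => [sqN|hal'].
    have -> : size s = N by apply: succn_inj; rewrite -sqs.
    by rewrite subnn mul0r.
  by rewrite mulr_ge0_le0 // ltW.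
suff : K ze by rewrite (negbTE Kze).
apply: (@K_scaled ze tau tau0).
move: hs Ks; rewrite /inK; case: st => hs Ks'.
  have hsum : \sum_(x <- s) H x * nrm ((w - x)^-1) < 0.
    apply: hs => x xs; have wx : w - x != 0 by rewrite subr_eq0 ws.
    by rewrite pmulr_llt0 ?nrm_gt0 ?invr_neq0 //; have := Ks' x xs.
  rewrite -(pmulr_rlt0 _ hNR); apply: (le_lt_trans hj).
  by have := ltr_leD hsum hal; rewrite addr0.
have hsum : \sum_(x <- s) H x * nrm ((w - x)^-1) <= 0.
  apply: hs => x xs; have wx : w - x != 0 by rewrite subr_eq0 ws.
  by rewrite pmulr_lle0 ?nrm_gt0 ?invr_neq0 //; have := Ks' x xs.
rewrite -(pmulr_rle0 _ hNR); apply: (le_trans hj).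
by have := lerD hsum hal; rewrite addr0.
Qed.

Lemma grace m : forall (q h : {poly C}) (z : C), q != 0 -> (size q <= m.+1)%N ->
  (size q = m.+1 \/ al < 0) -> (forall w, root q w -> K w) ->
  size h = m.+1 -> (forall u, root h u -> ~~ K (z - u)) -> pairP m q h z != 0.
Proof.
elim: m => [|m IH] q h z q0 sq inv rq sh rh.
  rewrite /pairP big_ord1 subn0 derivn0 mulr1n.
  have qE := size1_polyC sq; have hE := size1_polyC (eq_leq sh).
  have q00 : q`_0 != 0 by apply: contra q0 => /eqP e; rewrite qE e.
  have h00 : h`_0 != 0.
    apply/eqP => e; move: sh; rewrite hE e size_poly0 //.
  by rewrite hE hornerC mulf_neq0.
have : size h != 1 by rewrite sh.
case/closed_rootP => u hu.
case/factor_theorem: (hu) => h' hE.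
have h'0 : h' != 0 by apply/eqP => e; move: sh; rewrite hE e mul0r size_poly0.
have sh' : size h' = m.+1.
  move: sh; rewrite hE size_Mmonic ?monicXsubC // size_XsubC addn2 /=.
  by move=> [].
rewrite hE mulrC pair_step ?sh' //.
have nK : ~~ K (z - u) by apply: rh.
have [r0 sr invr rr] := @laguerre m.+1 q (z - u) isT q0 sq inv rq nK.
apply: IH => //.
move=> v hv; apply: rh; rewrite hE rootM hv //.
Qed.
End L.

Unset Implicit Arguments. Set Strict Implicit.
Section Main.
Variable R : realType.
Local Notation C := R[i].
Local Notation Re := (@complex.Re R).
Local Notation Im := (@complex.Im R).

Lemma sq_lt (a b : R) : 0 <= a -> 0 <= b -> (a < b) = (a ^+ 2 < b ^+ 2).
Proof. by move=> ha hb; rewrite (ltr_pXn2r (isT : (0 < 2)%N)). Qed.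
Lemma sq_le (a b : R) : 0 <= a -> 0 <= b -> (a <= b) = (a ^+ 2 <= b ^+ 2).
Proof. by move=> ha hb; rewrite (ler_pXn2r (isT : (0 < 2)%N)). Qed.

Lemma nrm_ge0 (x : C) : 0 <= Re x ^+ 2 + Im x ^+ 2.
Proof. by rewrite addr_ge0 ?sqr_ge0. Qed.

Lemma norm_sq (x : C) : `|x| = (Num.sqrt (Re x ^+ 2 + Im x ^+ 2))%:C.
Proof. exact: normc_def. Qed.

Lemma cmp_norm (x : C) (r : R) : 0 <= r ->
  [/\ (`|x| < r%:C) = (Re x ^+ 2 + Im x ^+ 2 < r ^+ 2),
      (`|x| <= r%:C) = (Re x ^+ 2 + Im x ^+ 2 <= r ^+ 2),
      (r%:C < `|x|) = (r ^+ 2 < Re x ^+ 2 + Im x ^+ 2) &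
      (r%:C <= `|x|) = (r ^+ 2 <= Re x ^+ 2 + Im x ^+ 2)].
Proof.
move=> r0; rewrite norm_sq ltcR lecR ltcR lecR.
have s0 := sqrtr_ge0 (Re x ^+ 2 + Im x ^+ 2).
have e := sqr_sqrtr (nrm_ge0 x).
by rewrite (sq_lt _ _ s0 r0) (sq_le _ _ s0 r0) (sq_lt _ _ r0 s0) (sq_le _ _ r0 s0) e.
Qed.

Lemma ReB (x y : C) : Re (x - y) = Re x - Re y. Proof. by case: x; case: y. Qed.
Lemma ImB (x y : C) : Im (x - y) = Im x - Im y. Proof. by case: x; case: y. Qed.
Lemma ReM (x y : C) : Re (x * y) = Re x * Re y - Im x * Im y. Proof. by case: x; case: y. Qed.

Lemma circ (Om : C -> Prop) : circular_domain Om ->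
  exists st al b1 b2 g, forall z, Om z <-> inK st al b1 b2 g z.
Proof.
case=> [[c [r [r0 hc]]]|[a [b [a0 hc]]]].
  have eD : forall z, HH 1 (- (2 * Re c)) (- (2 * Im c)) (Re c ^+ 2 + Im c ^+ 2 - r ^+ 2) z
       = Re (z - c) ^+ 2 + Im (z - c) ^+ 2 - r ^+ 2.
    by move=> z; rewrite /HH ReB ImB; ring.
  have eE : forall z, HH (-1) (2 * Re c) (2 * Im c) (r ^+ 2 - Re c ^+ 2 - Im c ^+ 2) z
       = r ^+ 2 - (Re (z - c) ^+ 2 + Im (z - c) ^+ 2).
    by move=> z; rewrite /HH ReB ImB; ring.
  case: hc => [h|[h|[h|h]]].
  - exists true, 1, (- (2 * Re c)), (- (2 * Im c)), (Re c ^+ 2 + Im c ^+ 2 - r ^+ 2) => z.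
    have [e _ _ _] := cmp_norm (z - c) r (ltW r0).
    by rewrite h /inK eD subr_lt0 e.
  - exists false, 1, (- (2 * Re c)), (- (2 * Im c)), (Re c ^+ 2 + Im c ^+ 2 - r ^+ 2) => z.
    have [_ e _ _] := cmp_norm (z - c) r (ltW r0).
    by rewrite h /inK eD subr_le0 e.
  - exists true, (-1), (2 * Re c), (2 * Im c), (r ^+ 2 - Re c ^+ 2 - Im c ^+ 2) => z.
    have [_ _ e _] := cmp_norm (z - c) r (ltW r0).
    by rewrite h /inK eE subr_lt0 e.
  - exists false, (-1), (2 * Re c), (2 * Im c), (r ^+ 2 - Re c ^+ 2 - Im c ^+ 2) => z.
    have [_ _ _ e] := cmp_norm (z - c) r (ltW r0).
    by rewrite h /inK eE subr_le0 e.
have eH : forall z, HH 0 (- Re a) (Im a) b z = b - Re (a * z).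
  by move=> z; rewrite /HH ReM; ring.
case: hc => h.
- exists true, 0, (- Re a), (Im a), b => z.
  by rewrite h /inK eH subr_lt0.
- exists false, 0, (- Re a), (Im a), b => z.
  by rewrite h /inK eH subr_le0.
Qed.

Lemma coef_phi_der m k i :
  ((phi R m)^`(k))`_i = (m`!%:R)^-1 * (((k + i)%N == m)%:R) *+ (k + i)%N ^_ k.
Proof. by rewrite coef_derivn /phi coefZ coefXn. Qed.

Lemma fact_nz m : (m`!%:R : C) != 0.
Proof. by rewrite pnatr_eq0 -lt0n fact_gt0. Qed.

Lemma pair_phi_k m k (f : {poly C}) z : (size f <= m.+1)%N ->
  pairP m ((phi R m)^`(k)) f z = (f^`(k)).[z].
Proof.
move=> sf; rewrite /pairP.
under eq_bigr => i _ do rewrite coef_phi_der.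
case: (leqP k m) => hk.
  have hj : (m - k < m.+1)%N by rewrite ltnS leq_subr.
  rewrite (bigD1 (Ordinal hj)) //= [X in _ + X]big1 ?addr0; last first.
    move=> i ne.
    have -> : ((k + i)%N == m) = false.
      apply/negbTE/eqP => e; move/eqP: ne; apply; apply: val_inj => /=.
      by apply/eqP; rewrite -(eqn_add2l k) subnKC // e.
    by rewrite mulr0 mul0rn mul0r mul0rn.
  rewrite (subnKC hk) (subKn hk) eqxx mulr1 mulrnAl -mulrnA ffact_fact //.
  by rewrite -mulrnAl -[_ *+ m`!]mulr_natr mulVf ?fact_nz // mul1r.
rewrite (derivn_poly0 (leq_trans sf hk)) horner0 big1 // => i _.
have -> : ((k + i)%N == m) = false.
  by apply/negbTE; rewrite neq_ltn (leq_trans hk) ?orbT // leq_addr.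
by rewrite mulr0 mul0rn mul0r mul0rn.
Qed.

Lemma pair_lin m (n : nat) (a : 'I_n.+1 -> C) (qs : 'I_n.+1 -> {poly C}) f z :
  pairP m (\sum_(k < n.+1) a k *: qs k) f z = \sum_(k < n.+1) a k * pairP m (qs k) f z.
Proof.
rewrite /pairP; under eq_bigr => i _ do rewrite coef_sum mulr_suml -sumrMnl.
rewrite exchange_big /=; apply: eq_bigr => k _; rewrite mulr_sumr; apply: eq_bigr => i _.
by rewrite coefZ -mulrA mulrnAr.
Qed.

Lemma pair_phi m n (a : 'I_n.+1 -> C) (f : {poly C}) z : (size f <= m.+1)%N ->
  pairP m (Dop a (phi R m)) f z = (Dop a f).[z].
Proof.
move=> sf; rewrite /Dop pair_lin horner_sum; apply: eq_bigr => k _.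
by rewrite pair_phi_k // hornerZ.
Qed.

Lemma Dop0 n (a : 'I_n.+1 -> C) : Dop a 0 = 0.
Proof. by rewrite /Dop big1 // => k _; rewrite derivn_poly0 ?size_poly0 // scaler0. Qed.

Lemma Dop1 n (a : 'I_n.+1 -> C) : Dop a 1 = (a ord0)%:P.
Proof.
rewrite /Dop big_ord_recl derivn0 big1 ?addr0 ?alg_polyC // => k _.
by rewrite derivn_poly0 ?size_poly1 // scaler0.
Qed.

Lemma a0_nz n (a : 'I_n.+1 -> C) : invertible_on_Pn n (Dop a) -> a ord0 != 0.
Proof.
move=> [_ [S [_ [hST _]]]]; apply/negP => /eqP e.
have h1 : S (Dop a 1) = 1 by apply: hST; rewrite /inPn size_poly1.
have h0 : S (Dop a 0) = 0 by apply: hST; rewrite /inPn size_poly0.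
have : (1 : {poly C}) = 0 by rewrite -h1 -h0 Dop1 Dop0 e.
by move/eqP; rewrite oner_eq0.
Qed.

Lemma coef_Tphi n (a : 'I_n.+1 -> C) m i :
  (Dop a (phi R m))`_i = \sum_(k < n.+1) a k * ((phi R m)^`(k))`_i.
Proof. by rewrite /Dop coef_sum; apply: eq_bigr => k _; rewrite coefZ. Qed.

Lemma size_Tphi n (a : 'I_n.+1 -> C) m : a ord0 != 0 ->
  size (Dop a (phi R m)) = m.+1.
Proof.
move=> a0; apply/eqP; rewrite eqn_leq; apply/andP; split.
  apply/leq_sizeP => j hj; rewrite coef_Tphi big1 // => k _.
  rewrite coef_phi_der.
  have -> : ((k + j)%N == m) = false.
    by apply/negbTE; rewrite neq_ltn (leq_trans hj) ?orbT // leq_addl.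
  by rewrite mulr0 mul0rn mulr0.
apply: coef_size; rewrite coef_Tphi big_ord_recl big1 ?addr0.
  by rewrite coef_phi_der add0n eqxx ffactn0 mulr1 mulr1n mulf_neq0 ?invr_neq0 ?fact_nz.
move=> k _; rewrite coef_phi_der.
have -> : ((bump 0 k + m)%N == m) = false.
  by apply/negbTE; rewrite /bump /= add1n addSn neq_ltn ltnS leq_addl orbT.
by rewrite mulr0 mul0rn mulr0.
Qed.
End Main.


Theorem mainTheorem7 (R : realType) (n : nat) (a : 'I_n.+1 -> R[i]) :
  (1 <= n)%N ->
  invertible_on_Pn n (Dop a) ->
  forall (f : {poly R[i]}), inPn n f -> f != 0 ->
  forall (Om : R[i] -> Prop), circular_domain Om ->
  (forall k : nat, (1 <= k <= n)%N ->
     forall z, Zset (Dop a (phi R k)) z -> Om z) ->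
  forall z, Zset (Dop a f) z -> msum (Zset f) Om z.
Proof.
move=> n1 inv f fP f0 Om cd hk z hz.
have [st [al [b1 [b2 [g hOm]]]]] := @circ R Om cd.
apply: NNPP => nms.
have a0 := @a0_nz R n a inv.
have sf : size f = (size f).-1.+1 by rewrite prednK // size_poly_gt0.
move: sf; set m := (size f).-1 => sf.
have mn : (m <= n)%N by rewrite -ltnS -sf.
set q := Dop a (phi R m).
have sq : size q = m.+1 by apply: size_Tphi.
have q0 : q != 0 by rewrite -size_poly_eq0 sq.
have rq : forall w, root q w -> inK st al b1 b2 g w.
  move=> w rw; case: (posnP m) => [m0|mpos].
    have qE := size1_polyC (eq_leq (etrans sq (congr1 S m0))).
    move: rw; rewrite qE /root hornerC => /eqP e.
    by move: q0; rewrite qE e eqxx.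
  have hm : (0 < m <= n)%N by rewrite mpos mn.
  by apply/hOm; apply: (hk m hm w rw).
have rf : forall u, root f u -> ~~ inK st al b1 b2 g (z - u).
  move=> u ru; apply/negP => Kzu; apply: nms.
  exists u, (z - u); split => //; split; first by apply/hOm.
  by rewrite addrC subrK.
have := @grace R st al b1 b2 g m q f z q0 (eq_leq sq) (or_introl sq) rq sf rf.
by rewrite pair_phi ?sf //; move: hz; rewrite /Zset /root => ->.
Qed.
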